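(* An own-peak-only rule $\varphi$ on $\mathcal{E}_{\mathcal{SP}}$ is simple if and only if for each economy $(R,\Omega)\in\mathcal{E}_{\mathcal{SP}}$: (i) $\varphi_i(R,\Omega)=p(R_i)$ for every $i\in N^+(R,\Omega)$, and (ii) for every $i\in N^-(R,\Omega)$, $\varphi_i(R,\Omega)$ lies between $\frac{\Omega}{n}$ and $p(R_i)$ (i.e., in the closed interval with these endpoints).
   Context: Let $N=\{1,\dots,n\}$ be a finite set of agents. A preference $R_i$ is a continuous complete preorder on $\mathbb{R}_+\cup\{\infty\}$; its peak $p(R_i)$ is the set of maximal elements. $R_i$ is single-peaked if $p(R_i)$ is a singleton (identified with its element) and for $x,x'\in\mathbb{R}_+$, $x$ is strictly preferred to $x'$ whenever $x'<x\le p(R_i)$ or $p(R_i)\le x<x'$; $\mathcal{SP}$ is the set of these. An economy is $(R,\Omega)$, $R\in\mathcal{SP}^n$, $\Omega>0$; $\mathcal{E}_{\mathcal{SP}}$ is the set of economies; a rule is a map $\varphi:\mathcal{E}_{\mathcal{SP}}\to\mathbb{R}^n_+$ with $\sum_j\varphi_j(R,\Omega)=\Omega$. Own-peak-only: $p(R_i')=p(R_i)$ implies $\varphi_i(R,\Omega)=\varphi_i(R_i',R_{-i},\Omega)$. Let $z(R,\Omega)=\sum_jp(R_j)-\Omega$. Agent $i$ is simple if ($z\ge0$ and $p(R_i)<\Omega/n$) or ($z\le0$ and $p(R_i)>\Omega/n$); $N^+(R,\Omega)$ is the set of simple agents and $N^-(R,\Omega)=N\setminus N^+(R,\Omega)$;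 $E(R,\Omega)=\left|\Omega-\left(\sum_{j\in N^+}p(R_j)+|N^-|\frac{\Omega}{n}\right)\right|$. An own-peak-only rule $\varphi$ is simple if for every economy and $i$: $\varphi_i=p(R_i)$ for $i\in N^+$; $\varphi_i=\frac{\Omega}{n}+\nu_i$ for $i\in N^-$ when $z\ge0$; $\varphi_i=\frac{\Omega}{n}-\nu_i$ for $i\in N^-$ when $z\le0$; where $0\le\nu_i\le|p(R_i)-\frac{\Omega}{n}|$ and $\sum_{j\in N^-}\nu_j=E(R,\Omega)$. *)

(* Defs.v *)
From HB Require Import structures.
From mathcomp Require Import all_boot all_order all_algebra.
From mathcomp Require Import all_classical all_reals.
From mathcomp Require Import topology ereal.
Set Implicit Arguments. Unset Strict Implicit. Unset Printing Implicit Defensive.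
Import Order.TTheory GRing.Theory Num.Theory.
Local Open Scope classical_set_scope.
Local Open Scope ring_scope.

Section Defs.
Variable R : realType.

(* The consumption space R_+ \cup {oo}, as a subset of the extended reals. *)
Definition cspace : set (\bar R) := [set x | (0 <= x)%E].

(* A preference is a weak preference relation: pref x y means "x R_i y". *)
Definition pref := \bar R -> \bar R -> Prop.

Definition complete_preorder (P : pref) : Prop :=
  (forall x y, cspace x -> cspace y -> P x y \/ P y x) /\
  (forall x y z, cspace x -> cspace y -> cspace z -> P x y -> P y z -> P x z).

Definition continuous_pref (P : pref) : Prop :=
  forall x, cspace x ->
    closed [set y | cspace y /\ P y x] /\ closed [set y | cspace y /\ P x y].

Definition is_preference (P : pref) : Prop :=
  complete_preorder P /\ continuous_pref P.

Definition strict (P : pref) x y := P x y /\ ~ P y x.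

Definition peakset (P : pref) : set (\bar R) :=
  [set x | cspace x /\ forall y, cspace y -> P x y].

(* the peak, identified with its (unique, for single-peaked preferences) element *)
Definition peak (P : pref) : \bar R := xget 0%E (peakset P).

Definition single_peaked (P : pref) : Prop :=
  is_preference P /\
  (exists p, peakset P = [set p]) /\
  (forall x x' : R, 0 <= x -> 0 <= x' ->
     (((x' < x)%R /\ (x%:E <= peak P)%E) \/ ((peak P <= x%:E)%E /\ (x < x')%R)) ->
     strict P x%:E x'%:E).

Variable n : nat.

Definition profile := 'I_n -> pref.

Definition economy (P : profile) (Om : R) : Prop :=
  (forall i, single_peaked (P i)) /\ 0 < Om.

Definition rule := profile -> R -> 'I_n -> R.

Definition is_rule (phi : rule) : Prop :=
  forall P Om, economy P Om ->
    (forall i, 0 <= phi P Om i) /\ \sum_(j < n) phi P Om j = Om.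

Definition own_peak_only (phi : rule) : Prop :=
  forall P Om i (Q : pref), economy P Om -> single_peaked Q ->
    peak Q = peak (P i) -> phi P Om i = phi (fun j => if j == i then Q else P j) Om i.

Definition zexc (P : profile) (Om : R) : \bar R :=
  ((\sum_(j < n) peak (P j)) - Om%:E)%E.

Definition share (Om : R) : R := Om / n%:R.

Definition simple_agent (P : profile) (Om : R) (i : 'I_n) : Prop :=
  ((0 <= zexc P Om)%E /\ (peak (P i) < (share Om)%:E)%E) \/
  ((zexc P Om <= 0)%E /\ ((share Om)%:E < peak (P i))%E).

Definition Eexc (P : profile) (Om : R) : \bar R :=
  `| Om%:E - ((\sum_(j < n | `[< simple_agent P Om j >]) peak (P j))
              + (#|[pred j : 'I_n | ~~ `[< simple_agent P Om j >]]|%:R * share Om)%:E) |%E.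

Definition simple_rule (phi : rule) : Prop :=
  own_peak_only phi /\
  forall P Om, economy P Om ->
    exists nu : 'I_n -> R,
      (forall i, simple_agent P Om i -> (phi P Om i)%:E = peak (P i)) /\
      (forall i, ~ simple_agent P Om i ->
         ((0 <= zexc P Om)%E -> phi P Om i = share Om + nu i) /\
         ((zexc P Om <= 0)%E -> phi P Om i = share Om - nu i) /\
         0 <= nu i /\ ((nu i)%:E <= `| peak (P i) - (share Om)%:E |)%E) /\
      ((\sum_(j < n | ~~ `[< simple_agent P Om j >]) (nu j)%:E)%E = Eexc P Om).

End Defs.

(* Main.v *)
Require Import Defs.
From HB Require Import structures.
From mathcomp Require Import all_boot all_order all_algebra lra.
From mathcomp Require Import all_classical all_reals.
From mathcomp Require Import topology ereal.
Import Order.TTheory GRing.Theory Num.Theory.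
Local Open Scope ring_scope.
Lemma hA (R: realType) (s x nu : R) (p : \bar R) : (s%:E <= p)%E -> x = s + nu -> 0 <= nu -> (nu%:E <= `|p - s%:E|)%E -> (s%:E <= x%:E)%E /\ (x%:E <= p)%E.
Proof. move=> sp -> nu0; case: p sp => [r| |] //=.
- rewrite !lee_fin => sr. rewrite ger0_norm ?subr_ge0 // => h; split; lra.
- move=> _ _; split; rewrite ?leey // lee_fin; lra.
Qed.
Lemma hB (R: realType) (s x nu : R) (p : \bar R) : (p <= s%:E)%E -> x = s - nu -> 0 <= nu -> (nu%:E <= `|p - s%:E|)%E -> (p <= x%:E)%E /\ (x%:E <= s%:E)%E.
Proof. move=> sp -> nu0; case: p sp => [r| |] //=.
- rewrite !lee_fin => sr. rewrite ler0_norm ?subr_le0 // => h; split; lra.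
- move=> _ _; split; rewrite ?leNye // lee_fin; lra.
Qed.
Lemma hC (R: realType) (s x : R) (p : \bar R) : (s%:E <= p)%E ->
  ((s%:E <= x%:E)%E /\ (x%:E <= p)%E) \/ ((p <= x%:E)%E /\ (x%:E <= s%:E)%E) ->
  s <= x /\ (`|x - s|%:E <= `|p - s%:E|)%E.
Proof. case: p => [r| |] //=; rewrite ?lee_fin.
- move=> sr H.
  have hx : s <= x by case: H => -[]; lra.
  have hr : x <= r by case: H => -[]; lra.
  have e1 : `|x - s| = x - s by apply: ger0_norm; lra.
  have e2 : `|r - s| = r - s by apply: ger0_norm; lra.
  rewrite e1 e2; split; lra.
- move=> _ [[h1 h2]|[h1 h2]]; split; rewrite ?leey //; by move: h1; rewrite leye_eq.
Qed.
Lemma hD (R: realType) (s x : R) (p : \bar R) : (p <= s%:E)%E ->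
  ((s%:E <= x%:E)%E /\ (x%:E <= p)%E) \/ ((p <= x%:E)%E /\ (x%:E <= s%:E)%E) ->
  x <= s /\ (`|x - s|%:E <= `|p - s%:E|)%E.
Proof. case: p => [r| |] //=; rewrite ?lee_fin.
- move=> sr H.
  have hx : x <= s by case: H => -[]; lra.
  have hr : r <= x by case: H => -[]; lra.
  have e1 : `|x - s| = - (x - s) by apply: ler0_norm; lra.
  have e2 : `|r - s| = - (r - s) by apply: ler0_norm; lra.
  rewrite e1 e2; split; lra.
- move=> _ [[h1 h2]|[h1 h2]]; split; rewrite ?leey //; by move: h2; rewrite leeNy_eq.
Qed.

Arguments hA {R s x nu p}.
Arguments hB {R s x nu p}.
Arguments hC {R s x p}.
Arguments hD {R s x p}.
Theorem lemma1 (R : realType) (n : nat) (phi : rule R n) :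
  is_rule phi -> own_peak_only phi ->
  (simple_rule phi <->
   (forall (P : profile R n) (Om : R), economy P Om ->
      (forall i, simple_agent P Om i -> (phi P Om i)%:E = peak (P i)) /\
      (forall i, ~ simple_agent P Om i ->
         (((share n Om)%:E <= (phi P Om i)%:E)%E /\ ((phi P Om i)%:E <= peak (P i))%E) \/
         ((peak (P i) <= (phi P Om i)%:E)%E /\ ((phi P Om i)%:E <= (share n Om)%:E)%E)))).
Proof.
move=> Hrule Hopo; split.
- move=> [_ H] P Om HE; have [nu [H1 [H2 H3]]] := H P Om HE; split => // i Hi.
  have [Hz1 [Hz2 [nu0 nule]]] := H2 i Hi.
  case: (leP 0%E (zexc P Om)) => hz.
  + left; apply: (hA _ (Hz1 hz) nu0 nule).
    rewrite leNgt; apply/negP => hlt; apply: Hi; left; split => //.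
  + right; apply: (hB _ (Hz2 (ltW hz)) nu0 nule).
    rewrite leNgt; apply/negP => hlt; apply: Hi; right; split => //; exact: ltW.
- move=> H; split => // P Om HE; have [H1 H2] := H P Om HE.
  set s := share n Om.
  have Hj : forall j, ~ simple_agent P Om j ->
     ((0 <= zexc P Om)%E -> s <= phi P Om j /\ (`|phi P Om j - s|%:E <= `|peak (P j) - s%:E|)%E) /\
     ((zexc P Om <= 0)%E -> phi P Om j <= s /\ (`|phi P Om j - s|%:E <= `|peak (P j) - s%:E|)%E).
    move=> j Hi; split => hz.
    + apply: hC (H2 j Hi).
      rewrite leNgt; apply/negP => hlt; apply: Hi; left; split => //.
    + apply: hD (H2 j Hi).
      rewrite leNgt; apply/negP => hlt; apply: Hi; right; split => //.
  exists (fun i => `|phi P Om i - s|); split => //; split.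
  + move=> i Hi; have [Ha Hb] := Hj i Hi.
    split; [move=> hz | split; [move=> hz | split; [exact: normr_ge0|]]].
    * have [hx _] := Ha hz; by rewrite ger0_norm ?subr_ge0 // addrC subrK.
    * have [hx _] := Hb hz; by rewrite ler0_norm ?subr_le0 // opprK addrC subrK.
    * case: (leP 0%E (zexc P Om)) => hz; [exact: (Ha hz).2 | exact: (Hb (ltW hz)).2].
  + rewrite /Eexc -/s.
    have e1 : (\sum_(j < n | `[< simple_agent P Om j >]) peak (P j) = (\sum_(j < n | `[< simple_agent P Om j >]) phi P Om j)%:E)%E.
      rewrite -sumEFin; apply: eq_bigr => j /asboolP hj; by rewrite H1.
    rewrite e1.
    have e3 : Om = \sum_(j < n | `[< simple_agent P Om j >]) phi P Om j + \sum_(j < n | ~~ `[< simple_agent P Om j >]) phi P Om j.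
      have := (Hrule P Om HE).2; rewrite (bigID (fun j => `[< simple_agent P Om j >])) /= => h; exact/esym.
    rewrite [(_ * s)%R](_ : _ = \sum_(j < n | ~~ `[< simple_agent P Om j >]) s); last first.
      by rewrite sumr_const mulr_natl.
    rewrite sumEFin -EFinD /=.
    congr (_%:E).
    have h : forall a b c : R, a + b - (a + c) = b - c by move=> a b c; rewrite opprD addrACA subrr add0r.
    rewrite [X in X - _]e3 h -sumrB.
    case: (leP 0%E (zexc P Om)) => hz.
    * rewrite ger0_norm; last first.
        apply: sumr_ge0 => j /asboolP Hi; rewrite subr_ge0; exact: ((Hj j Hi).1 hz).1.
      apply: eq_bigr => j /asboolP Hi; rewrite ger0_norm // subr_ge0; exact: ((Hj j Hi).1 hz).1.
    * rewrite ler0_norm; last first.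
        apply: sumr_le0 => j /asboolP Hi; rewrite subr_le0; exact: ((Hj j Hi).2 (ltW hz)).1.
      rewrite -sumrN; apply: eq_bigr => j /asboolP Hi; rewrite ler0_norm // subr_le0; exact: ((Hj j Hi).2 (ltW hz)).1.
Qed.
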